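(* For each $h\in\{1,2\}$, let $\mathrm{bd}_h\in\mathbb{BD}_n$ be a non-empty rational BD shape represented by the closed graph $G_h=(\mathcal{N},w_h)$, and let $R_h$ be a subgraph of $G_h$ such that $\mathrm{closure}(R_h)=G_h$. Let $G_1\sqcup G_2=(\mathcal{N},w)$. Then $\mathrm{bd}_1\uplus\mathrm{bd}_2\neq\mathrm{bd}_1\cup\mathrm{bd}_2$ if and only if there exist an arc $(i,j)$ of $R_1$ and an arc $(k,\ell)$ of $R_2$ such that (1) $w_1(i,j)<w_2(i,j)$ and $w_2(k,\ell)<w_1(k,\ell)$; and (2) $w_1(i,j)+w_2(k,\ell)<w(i,\ell)+w(k,j)$.
   Context: Let $\mathbb{Q}_\infty=\mathbb{Q}\cup\{+\infty\}$ with $d<+\infty$ and $d+(+\infty)=+\infty$ for all $d$. Let $\mathcal{N}=\{0,1,\dots,n\}$. A graph is a pair $(\mathcal{N},w)$ with $w:\mathcal{N}\times\mathcal{N}\to\mathbb{Q}_\infty$; $(i,j)$ is an arc if $w(i,j)<+\infty$. A path $n_0\cdots n_p$ has weight $\sum_{t=1}^p w(n_{t-1},n_t)$; the graph is consistent if it has no cycle of negative weight. Graphs are ordered by $G\unlhd G'$ iff $w(i,j)\le w'(i,j)$ for all $i,j$. A consistent graph is closed if $w(i,i)=0$ for all $i$ and $w(i,j)\le w(i,k)+w(k,j)$ for all $i,j,k$. The closure $\mathrm{closure}(G)$ of a consistent graph $G$ is the least upper bound (pointwise maximum) of all closed graphs $G^c\unlhd G$. $R=(\mathcal{N},w_R)$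 is a subgraph of $G=(\mathcal{N},w_G)$ if every arc of $R$ is an arc of $G$ with the same weight. A BD (bounded difference) shape is a subset of $\mathbb{R}^n$ defined by finitely many constraints of the forms $\pm x_i\le b$ or $x_i-x_j\le b$ ($i\neq j$, $b\in\mathbb{Q}$); $\mathbb{BD}_n$ is the set of them. A consistent graph $G=(\mathcal{N},w)$ represents the BD shape $\{\mathbf{x}\in\mathbb{R}^n : x_i-x_j\le w(i,j)\ \forall i,j\in\mathcal{N}\}$ where $x_0:=0$ (arc $(i,j)$ encodes $x_i-x_j\le w(i,j)$, $(i,0)$ encodes $x_i\le w(i,0)$, $(0,j)$ encodes $-x_j\le w(0,j)$). $G_1\sqcup G_2=(\mathcal{N},w)$ with $w(i,j)=\max(w_1(i,j),w_2(i,j))$. $\mathrm{bd}_1\uplus\mathrm{bd}_2$ is the least BD shape containing $\mathrm{bd}_1\cup\mathrm{bd}_2$; when $G_1,G_2$ are closed it is represented by $G_1\sqcup G_2$. *)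

(* Defs.v *)
From HB Require Import structures.
From mathcomp Require Import all_boot all_order all_algebra.
From mathcomp Require Import classical_sets reals.
Set Implicit Arguments. Unset Strict Implicit. Unset Printing Implicit Defensive.
Import Order.TTheory GRing.Theory Num.Theory.
Local Open Scope ring_scope.
Local Open Scope classical_set_scope.

(* Q_oo = Q u {+oo}: [Some q] is q, [None] is +oo. *)
Definition qinf := option rat.

Definition addQ (a b : qinf) : qinf :=
  match a, b with Some x, Some y => Some (x + y) | _, _ => None end.

Definition leQ (a b : qinf) : bool :=
  match a, b with
  | _, None => true
  | None, Some _ => false
  | Some x, Some y => x <= y
  end.

Definition ltQ (a b : qinf) : bool :=
  match a, b with
  | None, _ => false
  | Some _, None => true
  | Some x, Some y => x < y
  end.

Definition maxQ (a b : qinf) : qinf := if leQ a b then b else a.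

Definition graph (n : nat) := 'I_n.+1 -> 'I_n.+1 -> qinf.

Definition is_arc n (G : graph n) i j : Prop := G i j <> None.

Fixpoint pweight n (G : graph n) (x : 'I_n.+1) (s : seq 'I_n.+1) : qinf :=
  match s with
  | [::] => Some 0
  | y :: s' => addQ (G x y) (pweight G y s')
  end.

(* no cycle of negative weight (paths through non-arcs have weight +oo) *)
Definition consistent n (G : graph n) : Prop :=
  forall x s, last x s = x -> leQ (Some 0) (pweight G x s).

Definition gle n (G G' : graph n) : Prop := forall i j, leQ (G i j) (G' i j).

Definition closed_graph n (G : graph n) : Prop :=
  [/\ consistent G, forall i, G i i = Some 0 &
      forall i j k, leQ (G i j) (addQ (G i k) (G k j))].

Definition is_closure n (G C : graph n) : Prop :=
  (forall Gc, closed_graph Gc -> gle Gc G -> gle Gc C) /\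
  (forall U, (forall Gc, closed_graph Gc -> gle Gc G -> gle Gc U) -> gle C U).

Definition subgraph n (R G : graph n) : Prop :=
  forall i j, is_arc R i j -> R i j = G i j.

Definition gjoin n (G1 G2 : graph n) : graph n := fun i j => maxQ (G1 i j) (G2 i j).

(* value of the variable x_i, with x_0 := 0 *)
Definition xval (R : realType) n (x : 'I_n -> R) (i : 'I_n.+1) : R :=
  match unlift ord0 i with Some j => x j | None => 0 end.

Definition bd_shape (R : realType) n (G : graph n) : set ('I_n -> R) :=
  [set x | forall i j, match G i j with
                       | None => true
                       | Some b => xval x i - xval x j <= ratr b end].

(* rational BD shapes: finitely many constraints x_i - x_j <= b, i <> j,
   where index 0 stands for the constant 0 (so this covers +-x_i <= b) *)
Definition is_BD (R : realType) n (S : set ('I_n -> R)) : Prop :=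
  exists cs : seq ('I_n.+1 * 'I_n.+1 * rat),
    all (fun c => c.1.1 != c.1.2) cs /\
    S = [set x | forall c, c \in cs -> xval x c.1.1 - xval x c.1.2 <= ratr c.2].

Definition bd_hull (R : realType) n (S : set ('I_n -> R)) : set ('I_n -> R) :=
  [set x | forall B, is_BD B -> S `<=` B -> B x].

(* Main.v *)
Require Import Defs.
From mathcomp Require Import all_boot all_order all_algebra.
From mathcomp Require Import classical_sets reals.
From mathcomp Require Import boolp ring lra zify.
Import Order.TTheory GRing.Theory Num.Theory.
Local Open Scope ring_scope.
Local Open Scope classical_set_scope.

Set Implicit Arguments. Unset Strict Implicit.

Lemma leQ_Some a g : leQ a (Some g) -> exists g1, a = Some g1 /\ g1 <= g.
Proof. by case: a => [x|] //= h; exists x. Qed.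

Lemma leQ_trans a b c : leQ a b -> leQ b c -> leQ a c.
Proof.
case: a => [x|]; case: b => [y|]; case: c => [z|] //=.
exact: le_trans.
Qed.

Lemma leQ_maxl a b : leQ a (maxQ a b).
Proof.
rewrite /maxQ; case: a => [x|]; case: b => [y|] //=.
by case: ifP => // /negbT; rewrite -ltNge => /ltW.
Qed.

Lemma leQ_maxr a b : leQ b (maxQ a b).
Proof.
rewrite /maxQ; case: a => [x|]; case: b => [y|] //=.
case: ifP => //= /negbT; rewrite -ltNge => /ltW //.
Qed.

Lemma leQ_maxP a b c : leQ a c -> leQ b c -> leQ (maxQ a b) c.
Proof. by rewrite /maxQ; case: ifP. Qed.

Lemma leQ_add a a' b b' : leQ a a' -> leQ b b' -> leQ (addQ a b) (addQ a' b').
Proof.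
case: a => [x|]; case: a' => [x'|]; case: b => [y|]; case: b' => [y'|] //=.
move=> h1 h2; exact: lerD.
Qed.

Lemma ltQ_Some g b : ltQ (Some g) b -> leQ b (Some g) -> False.
Proof. case: b => [y|] //= h1 h2. by move: (lt_le_trans h1 h2); rewrite ltxx. Qed.

Lemma maxQ_lt a b : ltQ a b -> maxQ a b = b.
Proof.
rewrite /maxQ; case: a => [x|]; case: b => [y|] //= h.
by rewrite (ltW h).
Qed.

Lemma maxQ_lt' a b : ltQ b a -> maxQ a b = a.
Proof.
rewrite /maxQ; case: a => [x|]; case: b => [y|] //= h.
by rewrite leNgt h.
Qed.

Lemma maxQ_Some a b g : maxQ a b = Some g -> leQ a (Some g) /\ leQ b (Some g).
Proof.
move=> h; rewrite -h; split; [exact: leQ_maxl | exact: leQ_maxr].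
Qed.

Section Sol.
Variable R : realType.
Variable n : nat.
Implicit Types (G : graph n) (y p : 'I_n.+1 -> R).

Definition sol G y := forall u v g, G u v = Some g -> y u - y v <= ratr g.
Definition tri G := forall i j k, leQ (G i j) (addQ (G i k) (G k j)).

Definition mn (a b : R) := if a <= b then a else b.

Lemma mn_le1 a b : mn a b <= a.
Proof. by rewrite /mn; case: (lerP a b) => // /ltW. Qed.
Lemma mn_le2 a b : mn a b <= b.
Proof. by rewrite /mn; case: (lerP a b). Qed.
Lemma mn_gt l a b : l < a -> l < b -> l < mn a b.
Proof. by rewrite /mn; case: (lerP a b). Qed.
Lemma mn_cases a b : mn a b = a \/ mn a b = b.
Proof. by rewrite /mn; case: (lerP a b); auto. Qed.

Definition colmin G j (c : R) p v :=
  match G v j with Some g => mn (c + ratr g) (p v) | None => p v end.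

Lemma colmin_le G j c p v : colmin G j c p v <= p v.
Proof. rewrite /colmin; case: (G v j) => [g|] //; exact: mn_le2. Qed.

Lemma colmin_le_col G j c p v g : G v j = Some g -> colmin G j c p v <= c + ratr g.
Proof. by rewrite /colmin => ->; exact: mn_le1. Qed.

Lemma colmin_gt G j c p v l :
  (forall g, G v j = Some g -> l < c + ratr g) -> l < p v -> l < colmin G j c p v.
Proof.
rewrite /colmin; case: (G v j) => [g|] // h1 h2.
by apply: mn_gt => //; apply: h1.
Qed.

Lemma sol_colmin G j c p : tri G -> sol G p -> sol G (colmin G j c p).
Proof.
move=> hT hp u v g huv.
have h1 : colmin G j c p u - p v <= ratr g.
  have := colmin_le G j c p u; have := hp _ _ _ huv; lra.
rewrite {2}/colmin; case E: (G v j) => [h|] //.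
case: (mn_cases (c + ratr h) (p v)) => ->  //.
have := hT u j v; rewrite huv E /=.
case/leQ_Some => e [He le].
have := colmin_le_col c p He.
have : ratr e <= ratr g + ratr h :> R by rewrite -rmorphD ler_rat.
lra.
Qed.

Lemma sol_shift G p (M : R) : sol G p -> sol G (fun v => p v + M).
Proof. move=> hp u v g h; have := hp _ _ _ h; lra. Qed.

Lemma sol_mono G G' p : (forall u v, leQ (G u v) (G' u v)) -> sol G p -> sol G' p.
Proof.
move=> hle hp u v g h; have := hle u v; rewrite h => /leQ_Some [g1 [h1 le]].
have := hp _ _ _ h1; have : ratr g1 <= ratr g :> R by rewrite ler_rat.
lra.
Qed.

Lemma tight G p a b q : tri G -> G b b = Some 0 -> sol G p ->
  ~~ leQ (G a b) (Some q) -> exists y, sol G y /\ ratr q < y a - y b.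
Proof.
move=> hT hd hp hq.
pose M : R := `|ratr q - p a| + 1.
exists (colmin G b 0 (fun v => p v + M)); split.
  by apply: sol_colmin => //; apply: sol_shift.
have hb := colmin_le_col 0 (fun v => p v + M) hd.
have ha : ratr q < colmin G b 0 (fun v => p v + M) a.
  apply: colmin_gt.
    move=> g hg; move: hq; rewrite hg /= -ltNge => hlt.
    by rewrite add0r ltr_rat.
  rewrite /M; have := ler_norm (ratr q - p a); lra.
move: hb; rewrite rmorph0; lra.
Qed.

Definition pt (y : 'I_n.+1 -> R) : 'I_n -> R := fun j => y (lift ord0 j) - y ord0.

Lemma xval_pt y u : xval (pt y) u = y u - y ord0.
Proof.
rewrite /xval; case: unliftP => [j ->|->]; last by rewrite subrr.
by rewrite /pt.
Qed.

Lemma shapeP G (x : 'I_n -> R) : bd_shape G x <-> sol G (xval x).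
Proof.
split.
  by move=> h u v g huv; have := h u v; rewrite huv.
move=> h u v; case E: (G u v) => [g|] //; exact: h.
Qed.

Lemma shape_pt G y : sol G y -> bd_shape G (pt y).
Proof.
move=> h; apply/shapeP => u v g huv; rewrite !xval_pt.
have := h _ _ _ huv; lra.
Qed.

End Sol.

Definition potg n (phi : 'I_n.+1 -> rat) : graph n := fun u v => Some (phi u - phi v).

Lemma pweight_potg n (phi : 'I_n.+1 -> rat) x s :
  pweight (potg phi) x s = Some (phi x - phi (last x s)).
Proof.
elim: s x => [|y s IH] x /=; first by rewrite subrr.
by rewrite IH /potg /=; congr Some; rewrite addrA subrK.
Qed.

Lemma potg_closed n (phi : 'I_n.+1 -> rat) : closed_graph (potg phi).
Proof.
split.
- by move=> x s hl; rewrite pweight_potg hl subrr /=.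
- by move=> i; rewrite /potg subrr.
- by move=> i j k; rewrite /potg /= addrA subrK.
Qed.

Lemma closure_sound (R : realType) n (Rg G : graph n) (x : 'I_n -> R) :
  (forall Gc, closed_graph Gc -> gle Gc Rg -> gle Gc G) ->
  sol Rg (xval x) -> sol G (xval x).
Proof.
move=> hC hR i j g hg; set X := xval x in hR *.
rewrite leNgt; apply/negP => hlt.
pose d : R := X i - X j - ratr g.
have d0 : 0 < d by rewrite /d; lra.
pose dn u v : nat := match Rg u v with Some r => `|denq r|%N | None => 1%N end.
pose D : nat := \prod_(u : 'I_n.+1) \prod_(v : 'I_n.+1) dn u v.
have D0 : (0 < D)%N.
  apply: prodn_gt0 => u; apply: prodn_gt0 => v; rewrite /dn.
  by case: (Rg u v) => [r|] //; rewrite absz_gt0 denq_neq0.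
pose m := Num.Def.archi_bound (d^-1).
pose K : nat := (D * m.+1)%N.
pose k : R := K%:R.
have hm : d^-1 < m%:R by apply: archi_boundP; rewrite invr_ge0 ltW.
have hk0 : 0 < k by rewrite /k ltr0n /K muln_gt0 D0.
have hkm : m%:R <= k.
  rewrite /k ler_nat /K; apply: (@leq_trans m.+1) => //.
  by rewrite leq_pmull.
have hkd : 1 < k * d.
  have h1 : d^-1 < k by apply: lt_le_trans hkm.
  have h2 : d^-1 * d < k * d by rewrite ltr_pM2r.
  by rewrite mulVf ?gt_eqF in h2.
pose f u := Num.Def.floor (k * X u).
have fle u : (f u)%:~R <= k * X u by apply: floor_le.
have fgt u : k * X u < (f u + 1)%:~R.
  by rewrite -floor_lt_int ltzD1.
pose phi u : rat := (f u)%:~R / K%:R.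
have rphi u v : ratr (phi u - phi v) = ((f u)%:~R - (f v)%:~R) / k :> R.
  by rewrite rmorphB /= !fmorph_div /= !ratr_int ratr_nat mulrBl.
have hle : gle (potg phi) G.
  apply: hC; first exact: potg_closed.
  move=> u v; rewrite /potg /=; case E: (Rg u v) => [r|] //=.
  have hdv : (`|denq r| %| K)%N.
    rewrite /K dvdn_mulr // /D (bigD1 u) //= dvdn_mulr // (bigD1 v) //= dvdn_mulr //.
    by rewrite /dn E.
  pose c := (K %/ `|denq r|)%N.
  have hKc : K = (c * `|denq r|)%N by rewrite divnK.
  pose N : int := (c%:Z * numq r).
  have hN : ratr r * k = N%:~R.
    rewrite /k hKc -ratr_nat -rmorphM /= natrM.
    idtac.
    have -> : (`|denq r|%N%:R : rat) = (denq r)%:~R by rewrite -absz_denq.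
    rewrite mulrA [r * _]mulrC -mulrA.
    have -> : r * (denq r)%:~R = (numq r)%:~R :> rat.
      by rewrite -{1}(divq_num_den r) divfK // intr_eq0 denq_neq0.
    by rewrite rmorphM /= ratr_nat ratr_int /N intrM.
  have hr := hR u v r E.
  have h1 : ((f u - f v)%:~R : R) < (N + 1)%:~R.
    rewrite intrB intrD -hN.
    have := fle u; have := fgt v; rewrite intrD.
    have : k * X u - k * X v <= ratr r * k.
      by rewrite -mulrBr mulrC ler_pM2r.
    lra.
  rewrite ltr_int ltzD1 in h1.
  rewrite -(ler_rat R) rphi ler_pdivrMr // hN -intrB ler_int //.
have := hle i j; rewrite hg /potg /= => hp.
have : ratr g < ratr (phi i - phi j) :> R.
  rewrite rphi ltr_pdivlMr //.
  have := fle j; have := fgt i; rewrite intrD.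
  have : k * d = k * X i - k * X j - ratr g * k by rewrite /d; ring.
  lra.
by rewrite ltr_rat ltNge hp.
Qed.

Section Main.
Variable R : realType.
Variable n : nat.
Implicit Types (G : graph n) (y : 'I_n.+1 -> R).

Lemma not_sol G y : ~ sol G y -> exists u v g, G u v = Some g /\ ratr g < y u - y v.
Proof.
move=> h; apply: contrapT => hn; apply: h => u v g e.
rewrite leNgt; apply/negP => lt; apply: hn; by exists u, v, g.
Qed.

Lemma gjoin_tri G1 G2 : tri G1 -> tri G2 -> tri (gjoin G1 G2).
Proof.
move=> h1 h2 i j k; rewrite /gjoin; apply: leQ_maxP.
  apply: leQ_trans (h1 i j k) _; apply: leQ_add; exact: leQ_maxl.
apply: leQ_trans (h2 i j k) _; apply: leQ_add; exact: leQ_maxr.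
Qed.

Lemma viol_lt1 G1 G2 y u v a : sol (gjoin G1 G2) y -> G1 u v = Some a ->
  ratr a < y u - y v -> ltQ (Some a) (G2 u v).
Proof.
move=> hs e1 hlt; case E: (G2 u v) => [s|] //=.
have := hs u v; rewrite /gjoin e1 E /maxQ /=.
case: ifP => hh h.
  by rewrite -(ltr_rat R); apply: lt_le_trans hlt (h _ erefl).
by have := lt_le_trans hlt (h _ erefl); rewrite ltxx.
Qed.

Lemma viol_lt2 G1 G2 y u v b : sol (gjoin G1 G2) y -> G2 u v = Some b ->
  ratr b < y u - y v -> ltQ (Some b) (G1 u v).
Proof.
move=> hs e1 hlt; case E: (G1 u v) => [s|] //=.
have := hs u v; rewrite /gjoin e1 E /maxQ /=.
case: ifP => hh h.
  by have := lt_le_trans hlt (h _ erefl); rewrite ltxx.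
by move/negbT: hh; rewrite -ltNge.
Qed.

Lemma shape_BD G : (forall i, G i i = Some 0) -> is_BD (@bd_shape R n G).
Proof.
move=> hd.
exists [seq (p.1, p.2, odflt 0 (G p.1 p.2)) |
        p <- enum [pred p : 'I_n.+1 * 'I_n.+1 | (p.1 != p.2) && (G p.1 p.2 != None)]].
split.
  by apply/allP => c /mapP [p]; rewrite mem_enum => /andP [hne _] ->.
apply/seteqP; split => x hx.
  move=> c /mapP [p]; rewrite mem_enum => /andP [_ hN] -> /=.
  case E: (G p.1 p.2) hN => [g|] // _.
  by have := hx p.1 p.2; rewrite E.
move=> u v; case E: (G u v) => [g|] //.
case: (eqVneq u v) => [huv|huv].
  by subst v; move: E; rewrite hd => -[<-]; rewrite subrr rmorph0.
apply: (hx (u, v, g)).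
apply/mapP; exists (u, v); first by rewrite mem_enum inE /= huv E.
by rewrite /= E.
Qed.

Lemma tight_leQ G (p : 'I_n.+1 -> R) u v q : tri G -> (forall i, G i i = Some 0) -> sol G p ->
  (forall y, sol G y -> y u - y v <= ratr q) -> leQ (G u v) (Some q).
Proof.
move=> hT hd hp hall; case E: (leQ (G u v) (Some q)) => //.
have [y [hy hlt]] := @tight R n G p u v q hT (hd v) hp (negbT E).
by have := hall y hy; rewrite leNgt hlt.
Qed.

End Main.

Theorem theorem6 (R : realType) (n : nat)
  (bd1 bd2 : set ('I_n -> R)) (G1 G2 R1 R2 : graph n) :
  is_BD bd1 -> is_BD bd2 ->
  bd1 !=set0 -> bd2 !=set0 ->
  closed_graph G1 -> closed_graph G2 ->
  bd1 = @bd_shape R n G1 -> bd2 = @bd_shape R n G2 ->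
  subgraph R1 G1 -> subgraph R2 G2 ->
  is_closure R1 G1 -> is_closure R2 G2 ->
  let w := gjoin G1 G2 in
  (bd_hull (bd1 `|` bd2) <> bd1 `|` bd2 <->
   exists i j k l,
     [/\ is_arc R1 i j, is_arc R2 k l,
         ltQ (G1 i j) (G2 i j) /\ ltQ (G2 k l) (G1 k l) &
         ltQ (addQ (G1 i j) (G2 k l)) (addQ (w i l) (w k j))]).
Proof.
move=> _ _ [x1 hx1] [x2 hx2] [_ hd1 ht1] [_ hd2 ht2] e1 e2 hs1 hs2 [hc1 _] [hc2 _] w.
have hwT : tri w by apply: gjoin_tri.
have hwd : forall i, w i i = Some 0 by move=> i; rewrite /w /gjoin hd1 hd2.
have hp1 : sol G1 (xval x1) by apply/shapeP; rewrite -e1.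
have hp2 : sol G2 (xval x2) by apply/shapeP; rewrite -e2.
have hpw : sol w (xval x1) by apply: sol_mono hp1 => u v; exact: leQ_maxl.
have hull_w : forall x, sol w (xval x) -> bd_hull (bd1 `|` bd2) x.
  move=> x hx B [cs [_ eB]] hsub; rewrite eB => c hc.
  have hB : forall y, (bd1 `|` bd2) (pt y) ->
      xval (pt y) c.1.1 - xval (pt y) c.1.2 <= ratr c.2.
    by move=> y hy; have := hsub _ hy; rewrite eB; apply.
  have l1 : leQ (G1 c.1.1 c.1.2) (Some c.2).
    apply: (@tight_leQ R n G1 (xval x1)) => // y hy.
    have : xval (pt y) c.1.1 - xval (pt y) c.1.2 <= ratr c.2.
      by apply: hB; left; rewrite e1; apply: shape_pt.
    by rewrite !xval_pt; lra.
  have l2 : leQ (G2 c.1.1 c.1.2) (Some c.2).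
    apply: (@tight_leQ R n G2 (xval x2)) => // y hy.
    have : xval (pt y) c.1.1 - xval (pt y) c.1.2 <= ratr c.2.
      by apply: hB; right; rewrite e2; apply: shape_pt.
    by rewrite !xval_pt; lra.
  have := leQ_maxP l1 l2; rewrite -/(gjoin G1 G2 _ _) -/w.
  case/leQ_Some => g [hg le].
  have := hx _ _ _ hg; have : ratr g <= ratr c.2 :> R by rewrite ler_rat.
  lra.
split.
- move=> hne; apply: contrapT => hno; apply: hne.
  apply/seteqP; split => x hx; last first.
    by move=> B _ hsub; apply: hsub.
  have xw : sol w (xval x).
    apply/shapeP; apply: hx; first exact: shape_BD.
    move=> y [] hy; apply/shapeP.
      by apply: sol_mono (iffLR (shapeP _ _) _) => [u v|]; [exact: leQ_maxl| rewrite -e1].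
    by apply: sol_mono (iffLR (shapeP _ _) _) => [u v|]; [exact: leQ_maxr| rewrite -e2].
  case: (pselect (bd1 x)) => [h|n1]; first by left.
  case: (pselect (bd2 x)) => [h|n2]; first by right.
  exfalso; apply: hno.
  have nr1 : ~ sol R1 (xval x).
    move=> h; apply: n1; rewrite e1; apply/shapeP; exact: closure_sound h.
  have nr2 : ~ sol R2 (xval x).
    move=> h; apply: n2; rewrite e2; apply/shapeP; exact: closure_sound h.
  have [i [j [a [Ea ha]]]] := not_sol nr1.
  have [k [l [b [Eb hb]]]] := not_sol nr2.
  have Ga : G1 i j = Some a by rewrite -hs1 // /is_arc Ea.
  have Gb : G2 k l = Some b by rewrite -hs2 // /is_arc Eb.
  exists i, j, k, l; split.
  + by rewrite /is_arc Ea.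
  + by rewrite /is_arc Eb.
  + by rewrite Ga Gb; split; [exact: viol_lt1 xw Ga ha | exact: viol_lt2 xw Gb hb].
  + rewrite Ga Gb /=.
    case Eil: (w i l) => [g1|] //; case Ekj: (w k j) => [g2|] //=.
    have := xw _ _ _ Eil; have := xw _ _ _ Ekj.
    rewrite -(ltr_rat R) !rmorphD /=; lra.
- case=> i [j [k [l [ar1 ar2 [l1 l2] l3]]]].
  have Ga : G1 i j = R1 i j by rewrite hs1.
  have Gb : G2 k l = R2 k l by rewrite hs2.
  case Ea: (R1 i j) ar1 Ga => [a|] // _ Ga.
  case Eb: (R2 k l) ar2 Gb => [b|] // _ Gb.
  rewrite Ga Gb /= in l1 l2 l3.
  have wij : w i j = G2 i j by rewrite /w /gjoin Ga maxQ_lt.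
  have wkl : w k l = G1 k l by rewrite /w /gjoin Gb maxQ_lt'.
  have [d [hd_1 hd_2]] : exists d : R,
      (forall g, w i l = Some g -> ratr a < d + ratr g) /\
      (forall g, w k j = Some g -> ratr b + d < ratr g).
    move: l3; case: (w i l) => [g1|]; case: (w k j) => [g2|] /=.
    - move=> h; exists ((ratr a - ratr g1 + ratr g2 - ratr b) / 2).
      have : ratr (a + b) < ratr (g1 + g2) :> R by rewrite ltr_rat.
      rewrite !rmorphD /= => h'.
      by split => g [<-]; lra.
    - by move=> _; exists (ratr a - ratr g1 + 1); split => g // [<-]; lra.
    - by move=> _; exists (ratr g2 - ratr b - 1); split => g // [<-]; lra.
    - by move=> _; exists 0; split.
  pose p := xval x1.
  pose M : R := `|ratr a - p i| + `|ratr b + d - p k| + 1.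
  pose y := colmin w l d (colmin w j 0 (fun v => p v + M)).
  have hy : sol w y by do 2 apply: sol_colmin => //; apply: sol_shift.
  have yj : y j <= 0.
    apply: le_trans (colmin_le _ _ _ _ _) _.
    by have := colmin_le_col 0 (fun v => p v + M) (hwd j); rewrite rmorph0 addr0.
  have yl : y l <= d.
    by have := colmin_le_col d (colmin w j 0 (fun v => p v + M)) (hwd l); rewrite rmorph0 addr0.
  have hM1 := ler_norm (ratr a - p i).
  have hM2 := ler_norm (ratr b + d - p k).
  have hM3 := normr_ge0 (ratr a - p i).
  have hM4 := normr_ge0 (ratr b + d - p k).
  have yi : ratr a < y i.
    apply: colmin_gt; first exact: hd_1.
    apply: colmin_gt; last by rewrite /M; lra.
    move=> g; rewrite wij => hg; move: l1; rewrite hg /= => lt.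
    by rewrite add0r ltr_rat.
  have yk : ratr b + d < y k.
    apply: colmin_gt.
      move=> g; rewrite wkl => hg; move: l2; rewrite hg /= => lt.
      have : ratr b < ratr g :> R by rewrite ltr_rat.
      lra.
    apply: colmin_gt; last by rewrite /M; lra.
    by move=> g /hd_2; rewrite add0r.
  have hin := hull_w (pt y) (iffLR (shapeP _ _) (shape_pt hy)).
  move=> heq; have : (bd1 `|` bd2) (pt y) by rewrite -heq.
  case.
    rewrite e1 => /shapeP h; have := h _ _ _ Ga; rewrite !xval_pt; lra.
  rewrite e2 => /shapeP h; have := h _ _ _ Gb; rewrite !xval_pt; lra.
Qed.
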